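(* Let $0<\eta<1/2$, $0\le\delta<1/2$, and let $p_0>p_1>p_2\ge\ldots\ge p_N$ be reals in $[\eta,1-\eta]$ with $p_0-p_1=p_1-p_2$; set $\Delta_i=p_0-p_i$ and define $\mathbf{p}^0,\ldots,\mathbf{p}^N\in[0,1]^N$ by $\mathbf{p}^0_i=p_i$, and for $j\ge1$, $\mathbf{p}^j_i=p_i$ ($i\ne j$), $\mathbf{p}^j_j=p_0$. Fix a density matrix $\rho$ on $\mathcal{H}_A\otimes\mathcal{H}_R$. Suppose we are given $m$ copies of the state $\mathcal{E}(\rho)$, where it is known that $\mathcal{E}=\mathcal{E}^{\mathbf{p}^k}$ for some unknown $k\in\{0,\ldots,N\}$, and that a measurement on these copies identifies the best arm of $\mathbf{p}^k$ (arm $1$ if $k=0$, arm $k$ if $k\ge1$) with probability at least $1-\delta$ for every $k$. Then $$m\geq\frac{\eta(1-\eta)(1-2\sqrt{\delta(1-\delta)})}{16}H(\mathbf{p}^0).$$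
   Context: $\mathcal{H}_A$ has orthonormal basis $\ket{1},\ldots,\ket{N}$, $\mathcal{H}_R$ is a qubit. For $x\in\{0,1\}^N$, $O_x$ is the unitary with $O_x\ket{i}\ket{c}=\ket{i}\ket{c+x_i\bmod2}$, and for $\mathbf{p}\in[0,1]^N$, $\mathcal{E}^{\mathbf{p}}(\rho)=\sum_{x}\prod_i\mathbf{p}_i^{x_i}(1-\mathbf{p}_i)^{1-x_i}O_x\rho O_x^\dagger$. For $\mathbf{q}$ with unique largest entry $q_{i^*}$, $H(\mathbf{q})=\sum_{i\ne i^*}(q_{i^*}-q_i)^{-2}$; thus $H(\mathbf{p}^0)=\sum_{i=2}^N(p_1-p_i)^{-2}$. *)

(* Defs.v *)
From HB Require Import structures.
From mathcomp Require Import all_boot all_order all_algebra.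
From mathcomp Require Import complex.
From mathcomp Require Import reals.
Set Implicit Arguments. Unset Strict Implicit. Unset Printing Implicit Defensive.
Import Order.TTheory GRing.Theory Num.Theory.
Local Open Scope ring_scope.

(* Operators on a finite-dimensional Hilbert space with orthonormal basis indexed
   by a finite type T are represented by their matrix entries A a b = <a|A|b>. *)
Definition op (C : Type) (T : finType) := T -> T -> C.

Section Ops.
Variable C : numClosedFieldType.
Variable T : finType.

Definition mulop (A B : op C T) : op C T := fun a b => \sum_c A a c * B c b.
Definition adjop (A : op C T) : op C T := fun a b => (A b a)^*.
Definition trop (A : op C T) : C := \sum_a A a a.
Definition psd (A : op C T) : Prop :=
  forall v : T -> C, 0 <= \sum_a \sum_b (v a)^* * A a b * v b.
Definition density (A : op C T) : Prop := psd A /\ trop A = 1.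
Definition povm (O : finType) (M : O -> op C T) : Prop :=
  (forall o, psd (M o)) /\ (forall a b, \sum_o M o a b = (a == b)%:R).
(* m-fold tensor power; basis of H^{(x) m} indexed by functions 'I_m -> T *)
Definition tensor_pow (m : nat) (A : op C T) : op C {ffun 'I_m -> T} :=
  fun x y => \prod_(k < m) A (x k) (y k).
End Ops.
Arguments tensor_pow {C T} m A.

(* H_A (x) H_R : basis |i>|c>, i an arm ('I_N, arm i <-> paper's arm i+1), c : bool *)
Definition AR (N : nat) : finType := ('I_N * bool)%type.

Section Channel.
Variable R : realType.
Local Notation C := (complex R).

(* O_x |i>|c> = |i>|c + x_i mod 2> *)
Definition Ox (N : nat) (x : {ffun 'I_N -> bool}) : op C (AR N) :=
  fun a b => ((a.1 == b.1) && (a.2 == addb b.2 (x b.1)))%:R.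

Definition chan (N : nat) (q : 'I_N -> R) (rho : op C (AR N)) : op C (AR N) :=
  fun a b => \sum_(x : {ffun 'I_N -> bool})
     (real_complex R (\prod_i (if x i then q i else 1 - q i))) *
     mulop (mulop (Ox x) rho) (adjop (Ox x)) a b.

(* p : nat -> R gives p_0, p_1, ..., p_N; arm i : 'I_N corresponds to index i+1.
   pvec p k = p^k:  p^k_j = p_j (j <> k), p^k_k = p_0 (k >= 1); p^0_j = p_j. *)
Definition pvec (N : nat) (p : nat -> R) (k : nat) : 'I_N -> R :=
  fun i => if k == i.+1 then p 0%N else p i.+1.
End Channel.
Arguments pvec {R} N p k i.
Arguments chan {R N} q rho a b.

(* Main.v *)
Require Import Defs.
From HB Require Import structures.
From mathcomp Require Import all_boot all_order all_algebra.
From mathcomp Require Import complex.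
From mathcomp Require Import reals.
From mathcomp Require Import ring lra.
From Stdlib Require Import FunctionalExtensionality.
Import Order.TTheory GRing.Theory Num.Theory.
Local Open Scope ring_scope.
Set Implicit Arguments. Unset Strict Implicit. Unset Printing Implicit Defensive.

Section Gen.
Variable C : numClosedFieldType.
Variable T : finType.
Implicit Types (A : op C T) (v w : T -> C).

Definition qf A v w := \sum_a \sum_b (v a)^* * A a b * w b.

Lemma sum_delta (F : T -> C) a : \sum_t (t == a)%:R * F t = F a.
Proof.
rewrite (bigD1 a) //= eqxx mul1r big1 ?addr0 // => t /negPf ->; by rewrite mul0r.
Qed.

Lemma sum_delta_r (F : T -> C) a : \sum_t F t * (t == a)%:R = F a.
Proof. by under eq_bigr => t _ do rewrite mulrC; apply: sum_delta. Qed.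

Lemma qf_expand A v w x y :
  qf A (fun a => x * v a + y * w a) (fun a => x * v a + y * w a) =
  x^* * x * qf A v v + x^* * y * qf A v w + y^* * x * qf A w v + y^* * y * qf A w w.
Proof.
rewrite /qf !mulr_sumr -!big_split /=; apply: eq_bigr => a _.
rewrite !mulr_sumr -!big_split /=; apply: eq_bigr => b _.
rewrite rmorphD !rmorphM /=; ring.
Qed.

Lemma qf_delta A a b : qf A (fun t => (t == a)%:R) (fun t => (t == b)%:R) = A a b.
Proof.
rewrite /qf; under eq_bigr => t _ do under eq_bigr => u _ do rewrite rmorph_nat -mulrA.
under eq_bigr => t _ do rewrite -mulr_sumr.
rewrite sum_delta; by rewrite sum_delta_r.
Qed.

Lemma psd_real A v : psd A -> qf A v v \is Num.real.
Proof. by move=> H; apply: ger0_real; apply: H. Qed.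

Lemma psd_herm A : psd A -> forall a b, A b a = (A a b)^*.
Proof.
move=> H a b.
have ea t : A t t \is Num.real by rewrite -qf_delta; apply: psd_real.
have h1 := psd_real (fun s => 1 * (s == a)%:R + 1 * (s == b)%:R) H.
have h2 := psd_real (fun s => 1 * (s == a)%:R + 'i * (s == b)%:R) H.
rewrite qf_expand !qf_delta in h1; rewrite qf_expand !qf_delta in h2.
set X := A a b in h1 h2 *; set Y := A b a in h1 h2 *.
have Raa := ea a; have Rbb := ea b.
have s1 : X + Y \is Num.real.
  have -> : X + Y = (1^* * 1 * A a a + 1^* * 1 * X + 1^* * 1 * Y + 1^* * 1 * A b b)
     - A a a - A b b by rewrite rmorph1; ring.
  by rewrite !rpredB.
have s2 : 'i * (X - Y) \is Num.real.
  have -> : 'i * (X - Y) = (1^* * 1 * A a a + 1^* * 'i * X + 'i^* * 1 * Y + 'i^* * 'i * A b b)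
     - A a a - A b b.
    rewrite rmorph1 conjCi; have hi : 'i * 'i = -1 :> C by rewrite -expr2 sqrCi.
    rewrite [- 'i * 'i]mulNr hi opprK; ring.
  by rewrite !rpredB.
move/CrealP: s1; move/CrealP: s2 => e2 e1.
rewrite rmorphM rmorphB /= (conjCi C) in e2.
rewrite rmorphD /= in e1.
have hi : 'i * 'i = -1 :> C by rewrite -expr2 sqrCi.
have e2' : X^* - Y^* = Y - X.
  have := congr1 (fun z => 'i * z) e2.
  rewrite /= !mulrA mulrN hi opprK mul1r mulN1r => ->; ring.
apply: (@mulfI _ 2%:R); first by rewrite pnatr_eq0.
have -> : 2%:R * X^* = (X^* + Y^*) + (X^* - Y^*) by ring.
rewrite e1 e2'; ring.
Qed.

Lemma qf_herm A v w : psd A -> qf A w v = (qf A v w)^*.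
Proof.
move=> H; rewrite /qf exchange_big rmorph_sum; apply: eq_bigr => a _.
rewrite rmorph_sum; apply: eq_bigr => b _.
by rewrite !rmorphM /= conjCK (psd_herm H a b); ring.
Qed.

Lemma CS A v w : psd A -> `|qf A v w| ^+ 2 <= qf A v v * qf A w w.
Proof.
move=> H.
set z := qf A v w; set a := qf A v v; set b := qf A w w.
have a0 : 0 <= a by apply: H.
have b0 : 0 <= b by apply: H.
have key x y : 0 <= x^* * x * a + x^* * y * z + y^* * x * z^* + y^* * y * b.
  rewrite /z /a /b -(qf_herm _ _ H) -qf_expand; exact: (H (fun t => x * v t + y * w t)).
have bR : b^* = b by apply/CrealP; apply: ger0_real.
rewrite normCK.
have [bz|bnz] := eqVneq b 0.
  rewrite bz mulr0.
  have [nz|nnz] := eqVneq (z * z^*) 0; first by rewrite nz.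
  exfalso.
  set n := z * z^* in nnz.
  have nR : n \is Num.real by rewrite /n -normCK rpredX ?normr_real.
  have kR : ((a + 1) / n) \is Num.real by rewrite rpredM ?rpredV // rpredD ?rpred1 // ger0_real.
  have := key 1 (- ((a + 1) / n) * z^*).
  rewrite rmorphM rmorphN /= conjCK (CrealP kR) bz !mulr0 addr0 rmorph1 !mul1r mulr1.
  have -> : - ((a + 1) / n) * z^* * z = - (a + 1).
    by rewrite -mulrA [z^* * z]mulrC -/n mulNr divfK.
  have -> : - ((a + 1) / n) * z * z^* = - (a + 1).
    by rewrite -mulrA -/n mulNr divfK.
  have -> : a + - (a + 1) + - (a + 1) = - (a + 2%:R) by ring.
  rewrite oppr_ge0 => h.
  have : 0 < a + 2%:R by rewrite ltr_wpDl.
  by move=> hp; have := lt_le_trans hp h; rewrite ltxx.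
have bp : 0 < b by rewrite lt_def bnz.
have := key b (- z^*).
rewrite bR rmorphN /= conjCK.
have -> : b * b * a + b * - z^* * z + - z * b * z^* + - z * - z^* * b =
   b * (a * b - z * z^*) by ring.
by rewrite pmulr_rge0 // subr_ge0.
Qed.

Lemma qf_e A v s : qf A v (fun t => (t == s)%:R) = \sum_a (v a)^* * A a s.
Proof. by rewrite /qf; apply: eq_bigr => a _; rewrite sum_delta_r. Qed.

Lemma psd_diag0 A s : psd A -> A s s = 0 -> forall b, A s b = 0.
Proof.
move=> H hs b.
have := CS (fun t => (t == s)%:R) (fun t => (t == b)%:R) H.
rewrite !qf_delta hs mul0r => h.
have : `|A s b| ^+ 2 = 0 by apply/eqP; rewrite eq_le h exprn_ge0.
by move/eqP; rewrite expf_eq0 /= normr_eq0 => /eqP.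
Qed.

Lemma chol_aux n : forall (S : {set T}) A, #|S| = n -> psd A ->
  (forall a b, a \notin S -> A a b = 0) ->
  exists V : T -> T -> C, (forall a b, A a b = \sum_r V a r * (V b r)^*) /\
     (forall a r, r \notin S -> V a r = 0).
Proof.
elim: n => [|n IH] S A cS H supp.
  exists (fun _ _ => 0); split=> [a b|//].
  rewrite big1 ?supp // => [|r _]; last by rewrite mul0r.
  by move/eqP: cS; rewrite cards_eq0 => /eqP ->; rewrite inE.
have [s sS] : exists s, s \in S.
  have : S != set0 by rewrite -card_gt0 cS.
  by case/set0Pn=> s hs; exists s.
have cS' : #|S :\ s| = n by move: cS; rewrite (cardsD1 s) sS add1n => -[].
have hS' a : a \notin S :\ s -> a = s \/ a \notin S.
  by rewrite !inE negb_and negbK => /orP[/eqP->|]; [left|right].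
have herm := psd_herm H.
have [s0|sn0] := eqVneq (A s s) 0.
  have r0 := psd_diag0 H s0.
  have supp' : forall a b, a \notin S :\ s -> A a b = 0.
    by move=> a b /hS' [->|/supp]; [apply: r0|apply].
  have [V [HV sV]] := IH (S :\ s) A cS' H supp'.
  exists V; split=> // a r rS; apply: sV; by rewrite !inE negb_and rS orbT.
have sp : 0 < A s s by rewrite lt_def sn0 /= -(qf_delta A s s); exact: (H (fun t => (t == s)%:R)).

pose d := sqrtC (A s s).
have dp : 0 < d by rewrite sqrtC_gt0.
have dR : d^* = d by apply/CrealP; apply: gtr0_real.
have dd : d * d = A s s by rewrite -expr2 sqrtCK.
have dn0 : d != 0 by rewrite gt_eqF.
have dVR : (d^-1)^* = d^-1 by apply/CrealP; rewrite rpredV gtr0_real.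
pose u a := A a s / d.
pose A' := fun a b => A a b - u a * (u b)^*.
have psdA' : psd A'.
  move=> v.
  have -> : \sum_a \sum_b (v a)^* * A' a b * v b =
     qf A v v - (\sum_a (v a)^* * A a s) * (\sum_a (v a)^* * A a s)^* / A s s.
    rewrite /A' /qf.
    transitivity (\sum_a \sum_b (v a)^* * A a b * v b -
        (\sum_a (v a)^* * u a) * (\sum_b (v b)^* * u b)^*).
      rewrite rmorph_sum mulr_suml -sumrB; apply: eq_bigr => a _.
      rewrite mulr_sumr -sumrB; apply: eq_bigr => b _.
      by rewrite rmorphM /= conjCK; ring.
    congr (_ - _).
    rewrite /u.
    have -> : \sum_a (v a)^* * (A a s / d) = (\sum_a (v a)^* * A a s) / d.
      by rewrite mulr_suml; apply: eq_bigr => a _; rewrite mulrA.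
    rewrite rmorphM /=.
    rewrite dVR -[in RHS]dd; field.
    by rewrite dn0.
  rewrite subr_ge0 ler_pdivrMr // -normCK.
  by have := CS v (fun t => (t == s)%:R) H; rewrite qf_delta qf_e.
have suppA' a b : a \notin S :\ s -> A' a b = 0.
  move/hS' => [->|aS].
    rewrite /A' /u rmorphM /= dVR -herm.
    apply/eqP; rewrite subr_eq0; apply/eqP.
    rewrite -[in RHS]dd; field; by rewrite dn0.
  by rewrite /A' /u !(supp a) // mul0r mul0r subr0.
have [V [HV sV]] := IH (S :\ s) A' cS' psdA' suppA'.
exists (fun a r => if r == s then u a else V a r); split.
  move=> a b; rewrite (bigD1 s) //= eqxx.
  have : A' a b = \sum_r V a r * (V b r)^* by apply: HV.
  rewrite (bigD1 s) //= !sV ?inE ?eqxx // mul0r add0r => e.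
  have -> : \sum_(i | i != s) (if i == s then u a else V a i) *
     (if i == s then u b else V b i)^* = \sum_(i | i != s) V a i * (V b i)^*.
    by apply: eq_bigr => i /negPf ->.
  by rewrite -e /A'; ring.
move=> a r rS; have rs : r != s by apply: contraNneq rS => ->.
rewrite (negPf rs); apply: sV; by rewrite !inE negb_and rS orbT.
Qed.

Lemma chol A : psd A -> exists V : T -> T -> C, forall a b, A a b = \sum_r V a r * (V b r)^*.
Proof.
move=> H.
have supp : forall a b, a \notin [set: T] -> A a b = 0 by move=> a b; rewrite inE.
have [V [HV _]] := chol_aux (erefl #|[set: T]|) H supp.
by exists V.
Qed.
End Gen.

Section Gram.
Variable C : numClosedFieldType.

Definition gram (T F : finType) (psi : T -> F -> C) : op C T :=
  fun a b => \sum_f psi a f * (psi b f)^*.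

Lemma sum_delta' (G : finType) (F : G -> C) g : \sum_h (g == h)%:R * F h = F g.
Proof.
rewrite (bigD1 g) //= eqxx mul1r big1 ?addr0 // => h; rewrite eq_sym => /negPf ->.
by rewrite mul0r.
Qed.

Lemma sum_pair (X G : finType) (F : (X * G)%type -> C) :
  \sum_p F p = \sum_x \sum_g F (x, g).
Proof. by rewrite pair_bigA; apply: eq_bigr => -[]. Qed.

Lemma tensor_gram (T F : finType) m (psi : T -> F -> C) x y :
  tensor_pow m (gram psi) x y = \sum_(g : {ffun 'I_m -> F})
     (\prod_k psi (x k) (g k)) * (\prod_k psi (y k) (g k))^*.
Proof.
rewrite /tensor_pow /gram bigA_distr_bigA /=; apply: eq_bigr => g _.
by rewrite rmorph_prod -big_split.
Qed.

Definition liftop (X G : finType) (M : op C X) : op C (X * G)%type :=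
  fun p q => (p.2 == q.2)%:R * M p.1 q.1.
Arguments liftop {X} G M.

Lemma qf_liftop (X G : finType) (M : op C X) (v w : (X * G)%type -> C) :
  qf (liftop G M) v w = \sum_g qf M (fun x => v (x, g)) (fun x => w (x, g)).
Proof.
rewrite /qf sum_pair exchange_big /=; apply: eq_bigr => g _; apply: eq_bigr => x _.
rewrite sum_pair /=; apply: eq_bigr => y _.
rewrite -(sum_delta' (fun h => (v (x, g))^* * M x y * w (y, h)) g).
by apply: eq_bigr => h _; rewrite /liftop /=; ring.
Qed.

Lemma psd_liftop (X G : finType) (M : op C X) : psd M -> psd (liftop G M).
Proof.
move=> H v; rewrite -[\sum_a _]/(qf (liftop G M) v v) qf_liftop.
by apply: sumr_ge0 => g _; apply: (H (fun x => v (x, g))).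
Qed.

Lemma trop_gram (T F : finType) (M : op C T) (psi : T -> F -> C) :
  trop (mulop M (gram psi)) =
  qf (liftop F M) (fun p => psi p.1 p.2) (fun p => psi p.1 p.2).
Proof.
rewrite qf_liftop /trop /mulop /gram /qf /=.
under eq_bigr => a _ do under eq_bigr => c _ do rewrite mulr_sumr.
under eq_bigr => a _ do rewrite exchange_big.
rewrite exchange_big; apply: eq_bigr => f _; apply: eq_bigr => a _.
by apply: eq_bigr => c _; ring.
Qed.

Lemma qf_sumop (T I : finType) (P : pred I) (M : I -> op C T) v w :
  qf (fun a b => \sum_(i | P i) M i a b) v w = \sum_(i | P i) qf (M i) v w.
Proof.
rewrite /qf [RHS]exchange_big; apply: eq_bigr => a _.
rewrite [RHS]exchange_big; apply: eq_bigr => b _.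
by rewrite mulr_sumr mulr_suml.
Qed.

Lemma psd_sumop (T I : finType) (P : pred I) (M : I -> op C T) :
  (forall i, P i -> psd (M i)) -> psd (fun a b => \sum_(i | P i) M i a b).
Proof.
move=> H v; rewrite -[\sum_a _]/(qf _ v v) qf_sumop.
by apply: sumr_ge0 => i Pi; apply: (H i Pi v).
Qed.

Lemma qf_id (T : finType) (v w : T -> C) :
  qf (fun a b => (a == b)%:R) v w = \sum_a (v a)^* * w a.
Proof.
rewrite /qf; apply: eq_bigr => a _.
rewrite -(sum_delta' (fun b => (v a)^* * w b) a).
by apply: eq_bigr => b _; ring.
Qed.

Lemma overlap_tensor (T F : finType) m (psa psb : T -> F -> C) :
  \sum_(p : ({ffun 'I_m -> T} * {ffun 'I_m -> F})%type)
     (\prod_k psa (p.1 k) (p.2 k))^* * \prod_k psb (p.1 k) (p.2 k) =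
  (\sum_(p : (T * F)%type) (psa p.1 p.2)^* * psb p.1 p.2) ^+ m.
Proof.
rewrite -[in RHS](card_ord m) -prodr_const sum_pair /=.
rewrite sum_pair /= bigA_distr_bigA /=; apply: eq_bigr => x _.
rewrite bigA_distr_bigA /=; apply: eq_bigr => g _.
by rewrite rmorph_prod -big_split.
Qed.
End Gram.
Arguments liftop {C X} G M.

Section Chan.
Variable R : realType.
Local Notation C := (complex R).
Local Notation "x %:C" := (real_complex R x).

Lemma conjRC (x : R) : (x%:C)^* = x%:C.
Proof. by apply/CrealP; rewrite realE !lecR -realE num_real. Qed.

Lemma rcD (x y : R) : (x + y)%:C = x%:C + y%:C.
Proof. by apply/eqP; rewrite eq_complex /= addr0 !eqxx. Qed.
Lemma rcM (x y : R) : (x * y)%:C = x%:C * y%:C.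
Proof. by apply/eqP; rewrite eq_complex /= !mulr0 !mul0r subr0 addr0 !eqxx. Qed.
Lemma rcN (x : R) : (- x)%:C = - x%:C.
Proof. by apply/eqP; rewrite eq_complex /= oppr0 !eqxx. Qed.
Lemma rcB (x y : R) : (x - y)%:C = x%:C - y%:C.
Proof. by rewrite rcD rcN. Qed.
Lemma rc1 : (1 : R)%:C = 1.
Proof. by []. Qed.
Lemma rc0 : (0 : R)%:C = 0.
Proof. by []. Qed.
Lemma rc_sum (I : Type) (r : seq I) (Pr : pred I) (F : I -> R) :
  (\sum_(i <- r | Pr i) F i)%:C = \sum_(i <- r | Pr i) (F i)%:C.
Proof. exact: (big_morph _ rcD rc0). Qed.
Lemma rc_prod (I : Type) (r : seq I) (Pr : pred I) (F : I -> R) :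
  (\prod_(i <- r | Pr i) F i)%:C = \prod_(i <- r | Pr i) (F i)%:C.
Proof. exact: (big_morph _ rcM rc1). Qed.
Lemma rcn n : ((n%:R : R))%:C = n%:R.
Proof. by elim: n => [|n IH] //; rewrite !mulrS rcD IH. Qed.
Lemma rcX (x : R) n : (x ^+ n)%:C = x%:C ^+ n.
Proof. by elim: n => [|n IH]; rewrite ?expr0 // !exprS rcM IH. Qed.

Lemma cjD (x y : C) : (x + y)^* = x^* + y^*. Proof. exact: rmorphD. Qed.
Lemma cjB (x y : C) : (x - y)^* = x^* - y^*. Proof. exact: rmorphB. Qed.
Lemma cjN (x : C) : (- x)^* = - x^*. Proof. exact: rmorphN. Qed.
Lemma cjM (x y : C) : (x * y)^* = x^* * y^*. Proof. exact: rmorphM. Qed.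
Lemma cj1 : (1 : C)^* = 1. Proof. exact: rmorph1. Qed.
Lemma cj0 : (0 : C)^* = 0. Proof. exact: rmorph0. Qed.
Lemma cjK (x : C) : x^*^* = x. Proof. exact: conjCK. Qed.

Definition n2 (z : C) : R := (complex.Re z)^+2 + (complex.Im z)^+2.

Lemma n2E (z : C) : z^* * z = (n2 z)%:C.
Proof. case: z => a b; apply/eqP; rewrite eq_complex /=; apply/andP; split; apply/eqP; rewrite /n2 /=; ring. Qed.

Lemma n2E' (z : C) : z * z^* = (n2 z)%:C.
Proof. by rewrite mulrC n2E. Qed.

Lemma n2_ge0 z : 0 <= n2 z.
Proof. by rewrite /n2 addr_ge0 ?sqr_ge0. Qed.

Lemma RcE (z : C) : 0 <= z -> z = (complex.Re z)%:C.
Proof. case: z => a b; rewrite lecE /= => /andP[/eqP -> _]. by []. Qed.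

Lemma normRC (x : R) : `|x%:C| = `|x|%:C.
Proof. rewrite normc_def /= expr0n addr0 /=. by rewrite sqrtr_sqr. Qed.

Variable N : nat.
Local Notation T := (AR N).
Local Notation X := {ffun 'I_N -> bool}.

Definition flip (x : X) (s : T) : T := (s.1, addb s.2 (x s.1)).

Lemma flipK x : involutive (flip x).
Proof. by case=> i c; rewrite /flip /= addbK. Qed.

Lemma Ox_entry x a b : Ox R x a b = (b == flip x a)%:R.
Proof.
case: a b => i c [i' c']; rewrite /Ox /flip /=.
rewrite !xpair_eqE eq_sym; case: eqP => [->|] //=.
by case: c; case: c'; case: (x i).
Qed.

Lemma conj_Ox x (rho : op C T) a b :
  mulop (mulop (Ox R x) rho) (adjop (Ox R x)) a b = rho (flip x a) (flip x b).
Proof.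
rewrite /mulop /adjop.
under eq_bigr => c _ do under eq_bigr => e _ do rewrite Ox_entry.
under eq_bigr => c _ do rewrite sum_delta.
under eq_bigr => c _ do rewrite Ox_entry rmorph_nat.
by rewrite sum_delta_r.
Qed.

Definition P (q : 'I_N -> R) (x : X) : R := \prod_i (if x i then q i else 1 - q i).

Lemma chan_entry q rho a b : chan q rho a b = \sum_x (P q x)%:C * rho (flip x a) (flip x b).
Proof. by apply: eq_bigr => x _; rewrite conj_Ox. Qed.

Lemma P_ge0 q x : (forall i, 0 <= q i <= 1) -> 0 <= P q x.
Proof.
move=> h; apply: prodr_ge0 => i _; case: (x i); have /andP[h1 h2] := h i => //.
by rewrite subr_ge0.
Qed.

Lemma P_sum q : \sum_x P q x = 1.
Proof.
rewrite /P -(bigA_distr_bigA (fun i (b : bool) => if b then q i else 1 - q i)) /=.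
by rewrite big1 // => i _; rewrite big_bool /=; ring.
Qed.

Variable j : 'I_N.
Variable qo : 'I_N -> R.

Definition qt (t : R) : 'I_N -> R := fun i => if i == j then t else qo i.
Definition W x := P (qt 0) x.
Definition fj (x : X) : X := [ffun i => if i == j then ~~ x i else x i].

Lemma fjK : involutive fj.
Proof. by move=> x; apply/ffunP => i; rewrite !ffunE; case: eqP => //; rewrite negbK. Qed.

Lemma P_split t x : P (qt t) x = (1 - t) * W x + t * W (fj x).
Proof.
have e1 (F : 'I_N -> R) : \prod_i F i = F j * \prod_(i | i != j) F i by rewrite (bigD1 j).
rewrite /W /P !e1 /qt !eqxx ffunE eqxx.
have -> : \prod_(i | i != j) (if fj x i then if i == j then 0 else qo i else 1 - (if i == j then 0 else qo i))
   = \prod_(i | i != j) (if x i then if i == j then t else qo i else 1 - (if i == j then t else qo i)).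
  by apply: eq_bigr => i /negPf hi; rewrite ffunE !hi.
have -> : \prod_(i | i != j) (if x i then if i == j then 0 else qo i else 1 - (if i == j then 0 else qo i))
   = \prod_(i | i != j) (if x i then if i == j then t else qo i else 1 - (if i == j then t else qo i)).
  by apply: eq_bigr => i /negPf hi; rewrite !hi.
by case: (x j) => /=; ring.
Qed.

Definition flj (s : T) : T := if s.1 == j then (s.1, ~~ s.2) else s.

Lemma flip_fj x s : flip (fj x) s = flip x (flj s).
Proof.
case: s => i c; rewrite /flip /flj /= ffunE.
by case: eqP => [->|] //=; rewrite addbN addNb.
Qed.

Lemma chan_split t rho a b : chan (qt t) rho a b =
  \sum_x (W x)%:C * ((1 - t%:C) * rho (flip x a) (flip x b) +
                     t%:C * rho (flip x (flj a)) (flip x (flj b))).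
Proof.
rewrite chan_entry.
under eq_bigr => x _ do rewrite P_split rcD !rcM rcB rc1 mulrDl.
under [in RHS]eq_bigr => x _ do rewrite mulrDr.
rewrite big_split /= [in RHS]big_split /=; congr (_ + _).
  by apply: eq_bigr => x _; ring.
rewrite (reindex_inj (inv_inj fjK)) /=; apply: eq_bigr => x _.
by rewrite fjK !flip_fj; ring.
Qed.

Definition phi (u : T -> C) (t : R) (s : T) (e : bool) : C :=
  if e then (if s.1 == j then (Num.sqrt (t * (1 - t)))%:C * (u (flj s) - u s) else 0)
  else (if s.1 == j then (1 - t%:C) * u s + t%:C * u (flj s) else u s).

Lemma phi_gram u t : 0 <= t <= 1 -> forall a b,
  \sum_e phi u t a e * (phi u t b e)^* =
  (1 - t%:C) * (u a * (u b)^*) + t%:C * (u (flj a) * (u (flj b))^*).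
Proof.
move=> /andP[t0 t1] a b.
have hs : (Num.sqrt (t * (1 - t)))%:C * (Num.sqrt (t * (1 - t)))%:C = t%:C * (1 - t%:C).
  by rewrite -rcM -expr2 sqr_sqrtr ?mulr_ge0 ?subr_ge0 // rcM rcB.
rewrite big_bool /phi /flj.
case: (a.1 == j); case: (b.1 == j);
  rewrite /= !(cj0, cj1, cjD, cjN, cjB, cjM, conjRC, mulr0, add0r) /= ?rc1.
- set s := (Num.sqrt (t * (1 - t)))%:C in hs *.
  apply/eqP; rewrite -subr_eq0; apply/eqP.
  transitivity ((s * s - t%:C * (1 - t%:C)) *
      ((u (a.1, ~~ a.2) - u a) * ((u (b.1, ~~ b.2))^* - (u b)^*))); first by ring.
  by rewrite hs subrr mul0r.
- by ring.
- by ring.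
- by ring.
Qed.

Definition D (ta tb : R) : R :=
  (1 - ta) * tb + ta * (1 - tb) - 2%:R * (Num.sqrt (ta * (1 - ta)) * Num.sqrt (tb * (1 - tb))).

Lemma sum_T (F : T -> C) : \sum_s F s = \sum_i \sum_c F (i, c).
Proof. by rewrite sum_pair. Qed.

Lemma phi_overlap u ta tb :
  \sum_s \sum_e (phi u ta s e)^* * phi u tb s e =
  (\sum_s n2 (u s) - D ta tb * n2 (u (j, false) - u (j, true)))%:C.
Proof.
rewrite rcB rc_sum rcM -n2E.
under [in RHS]eq_bigr => s _ do rewrite -n2E.
rewrite !sum_T (bigD1 j) //= [in RHS](bigD1 j) //=.
have -> : \sum_(i | i != j) \sum_c \sum_e (phi u ta (i, c) e)^* * phi u tb (i, c) e =
   \sum_(i | i != j) \sum_c (u (i, c))^* * u (i, c).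
  apply: eq_bigr => i /negPf hi; apply: eq_bigr => c _.
  by rewrite big_bool /phi /= hi cj0 mul0r add0r.
rewrite !big_bool /phi /flj /= eqxx /= /D.
rewrite !(rcB, rcD, rcM, rcn, rc1) /=.
rewrite !(cj0, cj1, cjD, cjN, cjB, cjM, conjRC) /= ?rc1.
by ring.
Qed.

Definition Fe := (X * T * bool)%type.
Definition U (V : T -> T -> C) x r : T -> C := fun s => V (flip x s) r.
Definition psi V t (s : T) (f : Fe) : C :=
  (Num.sqrt (W f.1.1))%:C * phi (U V f.1.1 f.1.2) t s f.2.

Hypothesis hqo : forall i, 0 <= qo i <= 1.

Lemma W_ge0 x : 0 <= W x.
Proof. apply: P_ge0 => i; rewrite /qt; case: eqP => _ //; by rewrite lexx ler01. Qed.

Lemma sW x : (Num.sqrt (W x))%:C * (Num.sqrt (W x))%:C = (W x)%:C.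
Proof. by rewrite -rcM -expr2 sqr_sqrtr // W_ge0. Qed.

Lemma gram_psi V (rho : op C T) t : 0 <= t <= 1 ->
  (forall a b, rho a b = \sum_r V a r * (V b r)^*) -> chan (qt t) rho = gram (psi V t).
Proof.
move=> ht hV; apply: functional_extensionality => a; apply: functional_extensionality => b.
rewrite chan_split /gram sum_pair /= sum_pair /=.
apply: eq_bigr => x _.
transitivity ((W x)%:C * \sum_r \sum_e phi (U V x r) t a e * (phi (U V x r) t b e)^*).
  congr (_ * _).
  under eq_bigr => r _ do rewrite phi_gram //.
  by rewrite big_split /= -!mulr_sumr !hV.
rewrite mulr_sumr; apply: eq_bigr => r _; rewrite mulr_sumr; apply: eq_bigr => e _.
by rewrite /psi /= cjM conjRC -sW; ring.
Qed.

Lemma overlap_psi V ta tb :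
  \sum_(p : (T * Fe)%type) (psi V ta p.1 p.2)^* * psi V tb p.1 p.2 =
  (\sum_x W x * \sum_r (\sum_s n2 (U V x r s) -
      D ta tb * n2 (U V x r (j, false) - U V x r (j, true))))%:C.
Proof.
rewrite sum_pair exchange_big /= sum_pair /= sum_pair /= rc_sum.
apply: eq_bigr => x _; rewrite rcM rc_sum mulr_sumr.
apply: eq_bigr => r _; rewrite -phi_overlap mulr_sumr exchange_big /=.
apply: eq_bigr => s _; rewrite mulr_sumr; apply: eq_bigr => e _.
by rewrite /psi /= cjM conjRC -sW; ring.
Qed.

Lemma n2_sub (a b : C) : n2 (a - b) <= 2%:R * (n2 a + n2 b).
Proof.
case: a b => a1 a2 [b1 b2]; rewrite /n2 /=.
have := sqr_ge0 (a1 + b1); have := sqr_ge0 (a2 + b2).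
move=> h1 h2; nra.
Qed.

Definition wj (V : T -> T -> C) := \sum_r \sum_c n2 (V (j, c) r).

Lemma gamma_bound V ta tb : 0 <= D ta tb ->
  \sum_r \sum_s n2 (V s r) = 1 ->
  1 - 2%:R * D ta tb * wj V <=
  \sum_x W x * \sum_r (\sum_s n2 (U V x r s) -
      D ta tb * n2 (U V x r (j, false) - U V x r (j, true))).
Proof.
move=> D0 hV.
under eq_bigr => x _ do rewrite sumrB mulrBr.
rewrite sumrB.
have -> : \sum_x W x * \sum_r \sum_s n2 (U V x r s) = 1.
  rewrite -(P_sum (qt 0)); apply: eq_bigr => x _.
  rewrite -[RHS]mulr1 -hV /W; congr (_ * _); apply: eq_bigr => r _.
  by rewrite /U (reindex_inj (inv_inj (flipK x))) /= ; apply: eq_bigr => s _; rewrite flipK.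
rewrite lerD2l lerN2.
have h1 x : \sum_r D ta tb * n2 (U V x r (j, false) - U V x r (j, true)) <= 2%:R * D ta tb * wj V.
  rewrite /wj -mulr_sumr [2%:R * D ta tb]mulrC -mulrA ler_wpM2l // mulr_sumr; apply: ler_sum => r _.
  have -> : \sum_c n2 (V (j, c) r) = n2 (U V x r (j, false)) + n2 (U V x r (j, true)).
    rewrite big_bool /U /flip /=; case: (x j) => /=; ring.
  exact: n2_sub.
apply: le_trans (_ : \sum_x W x * (2%:R * D ta tb * wj V) <= _).
  by apply: ler_sum => x _; rewrite ler_wpM2l ?W_ge0.
by rewrite -mulr_suml P_sum mul1r.
Qed.
End Chan.

Section Real.
Variable R : realType.

Definition Dr (ta tb : R) : R :=
  (1 - ta) * tb + ta * (1 - tb) - 2%:R * (Num.sqrt (ta * (1 - ta)) * Num.sqrt (tb * (1 - tb))).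

Lemma D_facts (ta tb : R) : 0 <= ta <= 1 -> 0 <= tb <= 1 ->
  exists x y, [/\ 0 <= x, 0 <= y, x ^+ 2 = ta * (1 - tb), y ^+ 2 = tb * (1 - ta) &
     Dr ta tb = (x - y) ^+ 2].
Proof.
move=> /andP[a0 a1] /andP[b0 b1].
exists (Num.sqrt (ta * (1 - tb))), (Num.sqrt (tb * (1 - ta))).
have ha : 0 <= ta * (1 - tb) by rewrite mulr_ge0 ?subr_ge0.
have hb : 0 <= tb * (1 - ta) by rewrite mulr_ge0 ?subr_ge0.
split; rewrite ?sqrtr_ge0 ?sqr_sqrtr //.
rewrite /Dr.
have -> : Num.sqrt (ta * (1 - ta)) * Num.sqrt (tb * (1 - tb)) =
   Num.sqrt (ta * (1 - tb)) * Num.sqrt (tb * (1 - ta)).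
  rewrite -!sqrtrM ?mulr_ge0 ?subr_ge0 //; congr Num.sqrt; ring.
rewrite sqrrB !sqr_sqrtr //; ring.
Qed.

Lemma D_ge0 (ta tb : R) : 0 <= ta <= 1 -> 0 <= tb <= 1 -> 0 <= Dr ta tb.
Proof. by move=> ha hb; have [x [y [_ _ _ _ ->]]] := D_facts ha hb; rewrite sqr_ge0. Qed.

Lemma D_same (t : R) : 0 <= t <= 1 -> Dr t t = 0.
Proof.
move=> /andP[t0 t1]; rewrite /Dr -expr2 sqr_sqrtr ?mulr_ge0 ?subr_ge0 //; ring.
Qed.

Lemma D_le (eta ta tb : R) : 0 < eta -> eta <= ta <= 1 - eta -> eta <= tb <= 1 - eta ->
  Dr ta tb * (2%:R * (eta * (1 - eta))) <= (ta - tb) ^+ 2.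
Proof.
move=> e0 /andP[a0 a1] /andP[b0 b1].
have ha : 0 <= ta <= 1 by apply/andP; split; lra.
have hb : 0 <= tb <= 1 by apply/andP; split; lra.
have [x [y [x0 y0 hx hy ->]]] := D_facts ha hb.
have e1 : (x - y) ^+ 2 * (x + y) ^+ 2 = (ta - tb) ^+ 2.
  rewrite -exprMn.
  have -> : (x - y) * (x + y) = x ^+ 2 - y ^+ 2 by ring.
  by rewrite hx hy; ring.
have e2 : 2%:R * (eta * (1 - eta)) <= (x + y) ^+ 2.
  have : 2%:R * (eta * (1 - eta)) <= x ^+ 2 + y ^+ 2 by rewrite hx hy; nra.
  have : 0 <= x * y by rewrite mulr_ge0.
  move=> h1 h2; rewrite sqrrD; lra.
rewrite -e1; apply: ler_wpM2l => //; exact: sqr_ge0.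
Qed.
End Real.

Section R4.
Variable R : realType.

Lemma sq_le (x y : R) : 0 <= x -> 0 <= y -> x ^+ 2 <= y ^+ 2 -> x <= y.
Proof. by move=> x0 y0; rewrite ler_pXn2r // ?nnegrE. Qed.

Lemma two_states (pa pb qa qb n1 n2 del : R) :
  0 <= del -> del <= 1 / 2%:R ->
  0 <= pa -> 0 <= pb -> 0 <= qa -> 0 <= qb -> 0 <= n1 -> 0 <= n2 ->
  pa + qa = 1 -> pb + qb = 1 -> 1 - del <= pa -> 1 - del <= qb ->
  n1 ^+ 2 <= pa * pb -> n2 ^+ 2 <= qa * qb ->
  n1 + n2 <= 2%:R * Num.sqrt (del * (1 - del)).
Proof.
move=> d0 d1 pa0 pb0 qa0 qb0 n10 n20 sA sB hpa hqb c1 c2.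
set A := Num.sqrt pa; set B := Num.sqrt pb; set A' := Num.sqrt qa; set B' := Num.sqrt qb.
have A0 : 0 <= A by rewrite sqrtr_ge0.
have B0 : 0 <= B by rewrite sqrtr_ge0.
have A'0 : 0 <= A' by rewrite sqrtr_ge0.
have B'0 : 0 <= B' by rewrite sqrtr_ge0.
have eA : A ^+ 2 = pa by rewrite sqr_sqrtr.
have eB : B ^+ 2 = pb by rewrite sqr_sqrtr.
have eA' : A' ^+ 2 = qa by rewrite sqr_sqrtr.
have eB' : B' ^+ 2 = qb by rewrite sqr_sqrtr.
have h1 : n1 <= A * B by apply: sq_le; rewrite ?mulr_ge0 // exprMn eA eB.
have h2 : n2 <= A' * B' by apply: sq_le; rewrite ?mulr_ge0 // exprMn eA' eB'.
have u1 : 1 - del <= A * B'.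
  apply: sq_le; rewrite ?mulr_ge0 ?subr_ge0 //; first lra.
  rewrite exprMn eA eB'; have : 0 <= 1 - del by lra. nra.
have v1 : A' * B <= del.
  apply: sq_le; rewrite ?mulr_ge0 //.
  rewrite exprMn eA' eB; have : qa <= del by lra. have : pb <= del by lra. nra.
have iden : (A * B + A' * B') ^+ 2 + (A * B' - A' * B) ^+ 2 = 1.
  have -> : (A * B + A' * B') ^+ 2 + (A * B' - A' * B) ^+ 2 =
     (A ^+ 2 + A' ^+ 2) * (B ^+ 2 + B' ^+ 2) by ring.
  by rewrite eA eA' eB eB' sA sB mulr1.
set c := Num.sqrt (del * (1 - del)).
have c0 : 0 <= c by rewrite sqrtr_ge0.
have ec : c ^+ 2 = del * (1 - del) by rewrite sqr_sqrtr // mulr_ge0 // subr_ge0; lra.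
have S : A * B + A' * B' <= 2%:R * c.
  apply: sq_le; rewrite ?addr_ge0 ?mulr_ge0 //.
  rewrite exprMn ec.
  have w : 1 - 2%:R * del <= A * B' - A' * B by lra.
  have w0 : 0 <= 1 - 2%:R * del by lra.
  have : (1 - 2%:R * del) ^+ 2 <= (A * B' - A' * B) ^+ 2.
    by rewrite lerXn2r ?nnegrE //; lra.
  move: iden; nra.
lra.
Qed.

Lemma bern (y : R) m : 0 <= y -> 1 - m%:R * (1 - y) <= y ^+ m.
Proof.
move=> y0; elim: m => [|m IH]; first by rewrite mul0r subr0 expr0.
rewrite exprS.
have h : y * (1 - m%:R * (1 - y)) <= y * y ^+ m by rewrite ler_wpM2l.
have hm : 0 <= (m%:R : R) by rewrite ler0n.
apply: le_trans h.
rewrite -natr1.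
have : 0 <= m%:R * (1 - y) ^+ 2 by rewrite mulr_ge0 // sqr_ge0.
nra.
Qed.

Lemma pow_lb (g x : R) m : 1 - x <= g -> 0 <= x -> 1 - m%:R * x <= `|g| ^+ m.
Proof.
move=> hg x0.
have [h|h] := lerP 0 (1 - x).
  apply: le_trans (_ : (1 - x) ^+ m <= _).
    have e : 1 - (1 - x) = x by ring.
    by have := bern m h; rewrite e.
  rewrite lerXn2r ?nnegrE ?normr_ge0 //.
  by apply: le_trans hg _; rewrite ler_norm.
case: m => [|m]; first by rewrite mul0r subr0 expr0.
apply: le_trans (_ : 0 <= _); last by rewrite exprn_ge0.
have : 1 <= (m.+1%:R : R) by rewrite ler1n.
nra.
Qed.
End R4.

Section Arm.
Variable R : realType.
Local Notation C := (complex R).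
Local Notation "x %:C" := (real_complex R x).
Variable N : nat.
Local Notation T := (AR N).
Variables (j i0 : 'I_N) (qo : 'I_N -> R) (ta tb : R) (rho : op C T) (V : T -> T -> C).
Variables (m : nat) (M : 'I_N -> op C {ffun 'I_m -> T}).
Hypotheses (hji : j != i0) (hqo : forall k, 0 <= qo k <= 1)
  (hta : 0 <= ta <= 1) (htb : 0 <= tb <= 1)
  (hV : forall a b, rho a b = \sum_r V a r * (V b r)^*)
  (hn : \sum_r \sum_s n2 (V s r) = 1)
  (hMp : forall o, psd (M o)) (hMs : forall a b, \sum_o M o a b = (a == b)%:R).

Local Notation G := {ffun 'I_m -> Fe N}.
Definition Phi t (p : ({ffun 'I_m -> T} * G)%type) : C :=
  \prod_k psi j qo V t (p.1 k) (p.2 k).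

Lemma tensor_eq t : 0 <= t <= 1 ->
  tensor_pow m (chan (qt j qo t) rho) =
  gram (fun (x : {ffun 'I_m -> T}) (g : G) => \prod_k psi j qo V t (x k) (g k)).
Proof.
move=> ht; rewrite (gram_psi j hqo ht hV).
apply: functional_extensionality => x; apply: functional_extensionality => y.
by rewrite tensor_gram.
Qed.

Lemma trop_eq t o : 0 <= t <= 1 ->
  trop (mulop (M o) (tensor_pow m (chan (qt j qo t) rho))) =
  qf (liftop G (M o)) (Phi t) (Phi t).
Proof. by move=> ht; rewrite tensor_eq // trop_gram. Qed.

Definition Q : op C {ffun 'I_m -> T} := fun a b => \sum_(o | o != i0) M o a b.

Lemma psdQ : psd Q.
Proof. by apply: psd_sumop => o _; apply: hMp. Qed.

Lemma qfQ v w : qf (liftop G Q) v w = \sum_(o | o != i0) qf (liftop G (M o)) v w.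
Proof.
rewrite qf_liftop; under eq_bigr => g _ do rewrite qf_sumop.
rewrite exchange_big /=; apply: eq_bigr => o _; by rewrite qf_liftop.
Qed.

Lemma qf_split v w : qf (liftop G (M i0)) v w + qf (liftop G Q) v w = \sum_p (v p)^* * w p.
Proof.
rewrite qfQ -(bigD1 i0 (P := predT)) //=.
under eq_bigr => o _ do rewrite qf_liftop.
rewrite exchange_big /= [RHS]sum_pair [RHS]exchange_big /=; apply: eq_bigr => g _.
rewrite -qf_sumop.
have -> : (fun a b : {ffun 'I_m -> T} => \sum_(i < N) M i a b) = (fun a b => (a == b)%:R).
  by apply: functional_extensionality => a; apply: functional_extensionality => b; exact: hMs.
by rewrite qf_id.
Qed.

Lemma gamma_one : \sum_x W j qo x * \sum_r \sum_s n2 (U V x r s) = 1.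
Proof.
rewrite -(P_sum (qt j qo 0)); apply: eq_bigr => x _.
rewrite -[RHS]mulr1 -hn /W; congr (_ * _); apply: eq_bigr => r _.
by rewrite /U (reindex_inj (inv_inj (flipK x))) /= ; apply: eq_bigr => s _; rewrite flipK.
Qed.

Definition gam := \sum_x W j qo x * \sum_r (\sum_s n2 (U V x r s) -
      D ta tb * n2 (U V x r (j, false) - U V x r (j, true))).

Lemma inner_ab : \sum_p (Phi ta p)^* * Phi tb p = (gam ^+ m)%:C.
Proof. by rewrite overlap_tensor overlap_psi // rcX. Qed.

Lemma inner_same t : 0 <= t <= 1 -> \sum_p (Phi t p)^* * Phi t p = 1.
Proof.
move=> ht; have hD : D t t = 0 by exact: D_same ht.
rewrite overlap_tensor overlap_psi // hD.
under eq_bigr => x _ do under eq_bigr => r _ do rewrite mul0r subr0.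
by rewrite gamma_one expr1n.
Qed.

Variable delta : R.
Hypotheses (hd0 : 0 <= delta) (hd1 : delta <= 1 / 2%:R)
  (ha : (1 - delta)%:C <= trop (mulop (M i0) (tensor_pow m (chan (qt j qo ta) rho))))
  (hb : (1 - delta)%:C <= trop (mulop (M j) (tensor_pow m (chan (qt j qo tb) rho)))).

Lemma RcE' (z : C) : 0 <= z -> z = (complex.Re z)%:C.
Proof. exact: RcE. Qed.

Lemma arm_bound :
  1 - 2%:R * Num.sqrt (delta * (1 - delta)) <= m%:R * (2%:R * D ta tb * wj j V).
Proof.
have pM0 := psd_liftop (G:=G) (hMp i0).
have pQ := psd_liftop (G:=G) psdQ.
set Pa := qf (liftop G (M i0)) (Phi ta) (Phi ta).
set Pb := qf (liftop G (M i0)) (Phi tb) (Phi tb).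
set Qa := qf (liftop G Q) (Phi ta) (Phi ta).
set Qb := qf (liftop G Q) (Phi tb) (Phi tb).
set z1 := qf (liftop G (M i0)) (Phi ta) (Phi tb).
set z2 := qf (liftop G Q) (Phi ta) (Phi tb).
have Pa0 : 0 <= Pa by apply: pM0.
have Pb0 : 0 <= Pb by apply: pM0.
have Qa0 : 0 <= Qa by apply: pQ.
have Qb0 : 0 <= Qb by apply: pQ.
have hPa : (1 - delta)%:C <= Pa by rewrite /Pa -trop_eq.
have hQb : (1 - delta)%:C <= Qb.
  apply: le_trans hb _; rewrite trop_eq // /Qb qfQ (bigD1 j) //=.
  rewrite lerDl; apply: sumr_ge0 => o _; exact: (psd_liftop (G:=G) (hMp o)).
have sA : Pa + Qa = 1 by rewrite qf_split inner_same.
have sB : Pb + Qb = 1 by rewrite qf_split inner_same.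
have sAB : z1 + z2 = (gam ^+ m)%:C by rewrite qf_split inner_ab.
have c1 : `|z1| ^+ 2 <= Pa * Pb by apply: CS.
have c2 : `|z2| ^+ 2 <= Qa * Qb by apply: CS.
have tri : `|z1 + z2| <= `|z1| + `|z2| by apply: ler_normD.
rewrite sAB normRC in tri.
rewrite (RcE Pa0) in hPa c1 sA; rewrite (RcE Pb0) in c1 sB.
rewrite (RcE Qa0) in c2 sA; rewrite (RcE Qb0) in c2 sB hQb.
rewrite (RcE (normr_ge0 z1)) in c1 tri; rewrite (RcE (normr_ge0 z2)) in c2 tri.
rewrite -!rcM -!rcX lecR in c1; rewrite -!rcM -!rcX lecR in c2.
rewrite lecR in hPa; rewrite lecR in hQb.
rewrite -rcD lecR in tri.
rewrite -rcD in sA sB.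
have {}sA : complex.Re Pa + complex.Re Qa = 1 by apply: (@complexI R); rewrite sA.
have {}sB : complex.Re Pb + complex.Re Qb = 1 by apply: (@complexI R); rewrite rcD sB.
have nn (z : C) : 0 <= z -> 0 <= complex.Re z by move=> h; rewrite -lecR -RcE.
have key := two_states hd0 hd1 (nn _ Pa0) (nn _ Pb0) (nn _ Qa0) (nn _ Qb0)
   (nn _ (normr_ge0 z1)) (nn _ (normr_ge0 z2)) sA sB hPa hQb c1 c2.
have hD0 : 0 <= D ta tb by exact: D_ge0.
have hg := gamma_bound j hqo hD0 hn.
have hw : 0 <= wj j V by apply: sumr_ge0 => r _; apply: sumr_ge0 => c _; exact: n2_ge0.
have hx : 0 <= 2%:R * D ta tb * wj j V by rewrite !mulr_ge0.
have := pow_lb m hg hx.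
rewrite -normrX => h.
have := le_trans h (le_trans tri key).
lra.
Qed.
End Arm.

Lemma per_arm_R (R : realType) (eta eps m D w p0 p1 pn : R) :
  0 < eta * (1 - eta) -> 0 <= m -> 0 <= w -> 0 <= D -> 0 < p1 - pn ->
  p0 - pn <= 2%:R * (p1 - pn) -> 0 <= p0 - pn ->
  eps <= m * (2%:R * D * w) ->
  D * (2%:R * (eta * (1 - eta))) <= (pn - p0) ^+ 2 ->
  eta * (1 - eta) * eps * (p1 - pn) ^-2 <= 4%:R * m * w.
Proof.
move=> he hm hw hD hd h1 h2 hA hB.
have dp : 0 < (p1 - pn) ^+ 2 by rewrite exprn_gt0.
rewrite ler_pdivrMr //.
have s1 : eta * (1 - eta) * eps <= eta * (1 - eta) * (m * (2%:R * D * w)).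
  by rewrite ler_wpM2l // ltW.
have s2 : eta * (1 - eta) * (m * (2%:R * D * w)) = m * w * (D * (2%:R * (eta * (1 - eta)))) by ring.
have s3 : m * w * (D * (2%:R * (eta * (1 - eta)))) <= m * w * (pn - p0) ^+ 2.
  by rewrite ler_wpM2l // mulr_ge0.
have s4 : (pn - p0) ^+ 2 <= 4%:R * (p1 - pn) ^+ 2.
  have -> : (pn - p0) ^+ 2 = (p0 - pn) ^+ 2 by ring.
  have -> : 4%:R * (p1 - pn) ^+ 2 = (2%:R * (p1 - pn)) ^+ 2 by ring.
  by rewrite lerXn2r ?nnegrE //; lra.
have s5 : m * w * (pn - p0) ^+ 2 <= m * w * (4%:R * (p1 - pn) ^+ 2).
  by rewrite ler_wpM2l // mulr_ge0.
apply: le_trans s1 _; rewrite s2; apply: le_trans s3 _; apply: le_trans s5 _.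
by rewrite le_eqVlt; apply/orP; left; apply/eqP; ring.
Qed.

Theorem corollary2 (R : realType) (N : nat) (eta delta : R) (p : nat -> R)
  (rho : op (complex R) (AR N)) (m : nat)
  (M : 'I_N -> op (complex R) {ffun 'I_m -> AR N}) :
  (2 <= N)%N ->
  0 < eta < 1 / 2 ->
  0 <= delta < 1 / 2 ->
  p 1%N < p 0%N -> p 2%N < p 1%N ->
  (forall i : nat, (2 <= i < N)%N -> p i.+1 <= p i) ->
  (forall i : nat, (i <= N)%N -> eta <= p i <= 1 - eta) ->
  p 0%N - p 1%N = p 1%N - p 2%N ->
  density rho ->
  povm M ->
  (* for every k in {0..N}, the outcome is the best arm of p^k
     (paper's arm 1 if k = 0, arm k if k >= 1; i.e. our index k.-1)
     with probability >= 1 - delta *)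
  (forall k : 'I_N.+1,
     real_complex R (1 - delta) <=
     \sum_(i : 'I_N | val i == (val k).-1)
        trop (mulop (M i) (tensor_pow m (chan (pvec N p k) rho)))) ->
  eta * (1 - eta) * (1 - 2 * Num.sqrt (delta * (1 - delta))) / 16
    * (\sum_(2 <= i < N.+1) (p 1%N - p i) ^-2) <= m%:R.
Proof.
move=> hN /andP[e0 e1] /andP[d0 d1] h10 h21 hmono hrange hgap [hpsd htr] [hMp hMs] hsucc.
have [V hV] := chol hpsd.
have hn : \sum_r \sum_s n2 (V s r) = 1.
  rewrite exchange_big /=; apply: (@complexI R).
  rewrite rc_sum -[RHS]htr /trop; apply: eq_bigr => s _.
  by rewrite rc_sum hV; apply: eq_bigr => r _; rewrite n2E'.
have N0 : (0 < N)%N by apply: leq_trans hN.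
pose i0 : 'I_N := Ordinal N0.
pose qo (k : 'I_N) := p k.+1.
have hp01 n : (n <= N)%N -> 0 <= p n <= 1.
  by move=> hn'; have /andP[a b] := hrange n hn'; apply/andP; split; lra.
have hqo k : 0 <= qo k <= 1 by apply: hp01; exact: ltn_ord.
have mono n : (2 <= n <= N)%N -> p n <= p 2%N.
  elim: n => [|n IH] //= /andP[h2 hn'].
  have [->|h3] := eqVneq n.+1 2%N; first by [].
  have h2' : (2 <= n)%N by move: h2 h3; rewrite leq_eqVlt eq_sym => /orP[/eqP->|]; rewrite ?eqxx.
  apply: le_trans (IH _); first by apply: hmono; rewrite h2' /=.
  by rewrite h2' ltnW.
set eps := 1 - 2%:R * Num.sqrt (delta * (1 - delta)).
pose wn (k : nat) := wj (insubd i0 k) V.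
have wn0 k : 0 <= wn k.
  by apply: sumr_ge0 => r _; apply: sumr_ge0 => c _; exact: n2_ge0.
have arm (k : nat) : (1 <= k < N)%N ->
    eta * (1 - eta) * eps * (p 1%N - p k.+1) ^-2 <= 4%:R * m%:R * wn k.
  move=> /andP[k1 kN].
  pose j : 'I_N := insubd i0 k.
  have vj : val j = k by rewrite /j val_insubd kN.
  have ji0 : j != i0 by apply/eqP => /(congr1 val); rewrite vj /= => k0; rewrite k0 in k1.
  have eA : pvec N p 0 = qt j qo (p k.+1).
    apply: functional_extensionality => i; rewrite /pvec /qt /qo /=.
    by case: eqP => [->|//]; rewrite vj.
  have eB : pvec N p k.+1 = qt j qo (p 0%N).
    apply: functional_extensionality => i; rewrite /pvec /qt /qo /=.
    rewrite eqSS -vj; case: (i =P j) => [->|hij]; first by rewrite eqxx.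
    by case: eqP => // /val_inj hij'; rewrite hij' in hij.
  have ha := hsucc ord0.
  rewrite (big_pred1 i0) /= ?eA in ha; last by move=> i; rewrite /= -val_eqE.
  have kN1 : (k.+1 < N.+1)%N by [].
  have hb := hsucc (Ordinal kN1).
  rewrite (big_pred1 j) /= ?eB in hb; last by move=> i; rewrite /= -vj -val_eqE.
  have hta : 0 <= p k.+1 <= 1 by apply: hp01.
  have htb : 0 <= p 0%N <= 1 by apply: hp01.
  have hd1' : delta <= 1 / 2%:R by apply: ltW.
  have key := arm_bound ji0 hqo hta htb hV hn hMp hMs d0 hd1' ha hb.
  have hDle : D (p k.+1) (p 0%N) * (2%:R * (eta * (1 - eta))) <= (p k.+1 - p 0%N) ^+ 2.
    by apply: D_le => //; apply: hrange.
  have hk2 : p k.+1 <= p 2%N by apply: mono; rewrite ltnS k1 kN.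
  apply: (@per_arm_R R eta eps m%:R (D (p k.+1) (p 0%N)) (wn k) (p 0%N) (p 1%N) (p k.+1)).
  - by rewrite mulr_gt0 // subr_gt0; lra.
  - by rewrite ler0n.
  - exact: wn0.
  - exact: D_ge0.
  - by rewrite subr_gt0; lra.
  - by lra.
  - by lra.
  - by rewrite /wn -/j.
  - exact: hDle.
have wsum : \sum_(i : 'I_N) wj i V = 1.
  rewrite -hn /wj exchange_big /=; apply: eq_bigr => r _.
  by rewrite pair_bigA; apply: eq_bigr => -[].
have S2 : \sum_(1 <= i < N) wn i <= 1.
  rewrite -wsum.
  have -> : \sum_(i : 'I_N) wj i V = \sum_(0 <= i < N) wn i.
    by rewrite big_mkord; apply: eq_bigr => i _; rewrite /wn valKd.
  by rewrite (big_ltn N0) lerDr.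
have S1 : \sum_(1 <= i < N) eta * (1 - eta) * eps * (p 1%N - p i.+1) ^-2 <=
          \sum_(1 <= i < N) 4%:R * m%:R * wn i.
  by apply: ler_sum_nat => i hi; apply: arm.
rewrite big_add1 /=.
rewrite -mulr_sumr in S1.
have m0 : 0 <= (m%:R : R) by rewrite ler0n.
have S3 : \sum_(1 <= i < N) 4%:R * m%:R * wn i <= 4%:R * m%:R.
  by rewrite -mulr_sumr; rewrite -[X in _ <= X]mulr1 ler_wpM2l // mulr_ge0.
set L := \sum_(1 <= i < N) (p 1%N - p i.+1) ^- 2 in S1 *.
have := le_trans S1 S3 => S4.
have -> : eta * (1 - eta) * eps / 16%:R * L = (eta * (1 - eta) * eps * L) / 16%:R by ring.
rewrite ler_pdivrMr ?ltr0n //.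
lra.
Qed.
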